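(* Let $X$ be a finite set with $|X|\ge5$, $k$ an integer with $5<k<|X|-5$, $\mathfrak{C}$ a nonempty symmetric family of choice functions for $\binom{X}{k}$, $\mathcal{F}$ the set of simple averaging functions for $\mathfrak{C}$, and assume $r(\mathcal{F})=2$. Let $a^*_1\ne a^*_2$ be elements of $X$ and $\bar a^*=(a^*_1,a^*_2)$. Then there are $f\in\mathcal{F}_{[2]}$ and $\bar b=(b_1,b_2)\in X^2$ such that $f(\bar a^* )=a^*_2$, the sequence $(a^*_1,a^*_2,b_1,b_2)$ is without repetition, and $f(\bar b)=b_1\ne b_2$.
   Context: $\binom{X}{k}=\{Y\subseteq X:|Y|=k\}$; choice functions satisfy $c(Y)\in Y$. Symmetric: closed under $c\mapsto\pi*c$, $(\pi*c)(Y)=\pi^{-1}(c(\pi(Y)))$. $\mathcal{F}_{[r]}$: functions $f:X^r\to X$ with $f(a,\dots,a)=a$ such that for all $c_1,\dots,c_r\in\mathfrak{C}$, $Y\mapsto f(c_1(Y),\dots,c_r(Y))$ is in $\mathfrak{C}$. A monarchy is a projection. $r(\mathcal{F})=\min\{r:\text{some } f\in\mathcal{F}_{[r]}\text{ is not a monarchy}\}$. *)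

(* Defs.v *)
From mathcomp Require Import all_boot all_fingroup.
Set Implicit Arguments. Unset Strict Implicit. Unset Printing Implicit Defensive.

Section ChoiceFunctions.
Variables (X : finType) (k : nat).

Definition kset := {Y : {set X} | #|Y| == k}.

Definition kfun := {ffun kset -> X}.

Definition is_choice_fun (c : kfun) : Prop := forall Y : kset, c Y \in val Y.

(* pi(Y) as an element of binom(X,k); the default Y is never used since
   permutations preserve cardinality. *)
Definition kset_perm (pi : {perm X}) (Y : kset) : kset :=
  insubd Y (pi @: val Y).

Definition perm_act (pi : {perm X}) (c : kfun) : kfun :=
  [ffun Y => (pi^-1)%g (c (kset_perm pi Y))].

Definition symmetric_family (C : {set kfun}) : Prop :=
  forall (pi : {perm X}) (c : kfun), c \in C -> perm_act pi c \in C.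

Definition in_F (C : {set kfun}) (r : nat) (f : r.-tuple X -> X) : Prop :=
  (forall a : X, f (nseq_tuple r a) = a) /\
  (forall cs : r.-tuple kfun, (forall i : 'I_r, tnth cs i \in C) ->
     [ffun Y => f (map_tuple (fun c : kfun => c Y) cs)] \in C).

Definition monarchy (r : nat) (f : r.-tuple X -> X) : Prop :=
  exists i : 'I_r, forall x : r.-tuple X, f x = tnth x i.

(* r(F) = n, where r(F) = min { r >= 1 : some f in F_[r] is not a monarchy }. *)
Definition rF_eq (C : {set kfun}) (n : nat) : Prop :=
  0 < n /\
  (exists f : n.-tuple X -> X, in_F C f /\ ~ monarchy f) /\
  (forall m, 0 < m < n -> forall f : m.-tuple X -> X, in_F C f -> monarchy f).

End ChoiceFunctions.

(* Main.v *)
Require Import Defs.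
From mathcomp Require Import all_boot all_fingroup zify.
Set Implicit Arguments. Unset Strict Implicit. Unset Printing Implicit Defensive.
Set Implicit Arguments. Unset Strict Implicit. Unset Printing Implicit Defensive.

Section H.
Variables (X : finType) (k : nat).

Lemma ksp_val (pi : {perm X}) (Y : kset X k) : val (kset_perm pi Y) = pi @: val Y.
Proof.
rewrite /kset_perm insubdK //.
rewrite unfold_in card_imset ?(valP Y) //; exact: perm_inj.
Qed.

Lemma ksp_inv (pi : {perm X}) (Y : kset X k) :
  kset_perm pi^-1 (kset_perm pi Y) = Y.
Proof.
apply: val_inj; rewrite !ksp_val -imset_comp.
rewrite -[RHS]imset_id; apply: eq_imset => x /=; exact: permK.
Qed.

Lemma perm_ext (s t : seq X) : uniq s -> uniq t -> size s = size t ->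
  exists pi : {perm X}, map pi s = t.
Proof.
elim: s t => [|x s IH] [|y t] //=.
  by move=> _ _ _; exists 1%g.
move=> /andP[xs us] /andP[yt ut] [st].
have [sg Hs] := IH t us ut st.
exists (sg * tperm (sg x) y)%g.
rewrite permM tpermL; congr cons.
rewrite -[RHS]Hs; apply/eq_in_map => z zs.
rewrite permM tpermD //.
  by apply/eqP => E; rewrite (perm_inj E) zs in xs.
apply/eqP => E; move: yt; rewrite -Hs E.
by rewrite map_f.
Qed.

Lemma tup2 (T : Type) (t : 2.-tuple T) : t = [tuple tnth t ord0; tnth t (lift ord0 ord0)].
Proof.
apply: val_inj => /=; case: t => [[|a [|b [|]]]] //= _.
Qed.

Lemma fresh2 (s : seq X) : size s + 2 <= #|X| ->
  exists u v, [/\ u \notin s, v \notin s & u != v].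
Proof.
move=> hs.
have : 1 < #|~: [set x in s]|.
  have a : #|[set x in s]| <= size s by rewrite cardsE card_size.
  have b := cardsC [set x in s]. rewrite -b in hs.
  move: a hs; generalize #|[set x in s]| #|~: [set x in s]| => n m; lia.
case/card_gt1P => u [v [hu hv uv]]; exists u, v.
by move: hu hv; rewrite !inE.
Qed.

End H.

Section H.
Variables (X : finType) (k : nat) (C : {set kfun X k}).
Hypothesis hCsym : symmetric_family C.

Lemma conj_inF r (f : r.-tuple X -> X) (pi : {perm X}) : in_F C f ->
  in_F C (fun x => (pi^-1)%g (f (map_tuple pi x))).
Proof.
case=> h1 h2; split.
  move=> a; have -> : map_tuple pi (nseq_tuple r a) = nseq_tuple r (pi a).
    by apply: val_inj; rewrite /= map_nseq.
  by rewrite h1 permK.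
move=> cs hcs.
pose ds := map_tuple (perm_act pi^-1) cs.
have hds : forall i, tnth ds i \in C.
  by move=> i; rewrite tnth_map; apply: hCsym.
have := hCsym pi (h2 ds hds).
congr (_ \in C); apply/ffunP => Y; rewrite !ffunE; congr (_ (f _)).
apply: val_inj; rewrite /= -!map_comp; apply: eq_map => c /=.
by rewrite /perm_act ffunE ksp_inv invgK.
Qed.
End H.

Section H.
Variables (X : finType) (k : nat) (C : {set kfun X k}).
Hypothesis hCsym : symmetric_family C.
Hypothesis hCne : C != set0.
Hypothesis hCch : forall c, c \in C -> is_choice_fun c.
Hypothesis hk : 1 < k.
Hypothesis hkX : k < #|X|.

Lemma tperm_fix (x y : X) (S : {set X}) : x \in S -> y \in S -> tperm x y @: S = S.
Proof.
move=> xS yS; apply/eqP; rewrite eqEcard card_imset ?leqnn ?andbT; last exact: perm_inj.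
apply/subsetP => a /imsetP [b bS ->]; by case: tpermP => // ->.
Qed.

Lemma tuple2_map (T : Type) (g : T -> X) a b (f : 2.-tuple X -> X) :
  f (map_tuple g [tuple a; b]) = f [tuple g a; g b].
Proof. by congr f; apply: val_inj. Qed.

Lemma mem2 (f : 2.-tuple X -> X) : in_F C f -> forall x y, x != y ->
  f [tuple x; y] = x \/ f [tuple x; y] = y.
Proof.
case=> h1 h2 x y xy.
case/set0Pn: hCne => c cC.
have [A hA] : exists A : {set X}, #|A| == k.
  have : 0 < #|[set A : {set X} | #|A| == k]| by rewrite card_draws bin_gt0 ltnW.
  by rewrite card_gt0 => /set0Pn [A]; rewrite inE => hA; exists A.
pose Y0 : kset X k := exist _ A hA.
set z := f [tuple x; y].
have [zx|zx] := eqVneq z x; first by left.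
have [zy|zy] := eqVneq z y; first by right.
exfalso.
have hu : c Y0 \in A by exact: (hCch cC Y0).
set u := c Y0 in hu.
have [v hv] : exists v, v \in A :\ u.
  apply/set0Pn; rewrite -card_gt0.
  have := cardsD1 u A; rewrite hu (eqP hA) => E. lia.
have [w hw] : exists w, w \in ~: A.
  apply/set0Pn; rewrite -card_gt0.
  have := cardsC A; rewrite (eqP hA) => E. lia.
move: hv hw; rewrite !inE => /andP [vu vA] wA.
have [pi Hpi] : exists pi : {perm X}, map pi [:: x; y; z] = [:: u; v; w].
  apply: perm_ext => //=.
    by rewrite !inE negb_or xy eq_sym zx eq_sym zy.
  rewrite !inE negb_or eq_sym vu /=; apply/andP; split.
    by apply/negP => /eqP E; rewrite -E hu in wA.
  by rewrite andbT; apply/negP => /eqP E; move: wA; rewrite -E vA.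
move: Hpi => /= [px py pz].
pose Y := kset_perm pi^-1 Y0.
pose c1 := perm_act pi c.
have c1C : c1 \in C by exact: hCsym.
have kspY : kset_perm pi Y = Y0 by have := ksp_inv (pi^-1)%g Y0; rewrite invgK.
have c1Y : c1 Y = x by rewrite /c1 /perm_act ffunE kspY -/u -px permK.
have valY : val Y = pi^-1%g @: A by rewrite ksp_val.
have xY : x \in val Y by rewrite valY -[x](permK pi) px imset_f.
have yY : y \in val Y by rewrite valY -[y](permK pi) py imset_f.
pose c2 := perm_act (tperm x y) c1.
have c2C : c2 \in C by exact: hCsym.
have tY : kset_perm (tperm x y) Y = Y by apply: val_inj; rewrite ksp_val tperm_fix.
have c2Y : c2 Y = y by rewrite /c2 /perm_act ffunE tY c1Y tpermV tpermL.
have hC : forall i : 'I_2, tnth [tuple c1; c2] i \in C.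
  by case => [[|[|]]] //.
have := hCch (h2 _ hC) Y; rewrite ffunE tuple2_map c1Y c2Y -/z valY.
case/imsetP => a aA za.
by move: pz; rewrite za permKV => E; rewrite -E aA in wA.
Qed.
End H.

Theorem claim13p3 (X : finType) (k : nat) (C : {set kfun X k})
  (hX : 5 <= #|X|) (hk1 : 5 < k) (hk2 : k < #|X| - 5)
  (hCne : C != set0)
  (hCch : forall c, c \in C -> is_choice_fun c)
  (hCsym : symmetric_family C)
  (hr : rF_eq C 2)
  (a1 a2 : X) (ha : a1 != a2) :
  exists f : 2.-tuple X -> X, in_F C f /\
    exists b1 b2 : X,
      f [tuple a1; a2] = a2 /\
      uniq [:: a1; a2; b1; b2] /\
      f [tuple b1; b2] = b1 /\ b1 != b2.
Proof.
have hk : 1 < k by lia.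
have hkX : k < #|X| by lia.
case: hr => _ [[f [hf hnm]] _].
have mem := mem2 hCsym hCne hCch hk hkX hf.
have h1 := hf.1.
have key : forall P Q S T, uniq [:: P; Q; S; T] -> f [tuple P; Q] = Q ->
    f [tuple S; T] = S ->
  exists f : 2.-tuple X -> X, in_F C f /\
    exists b1 b2 : X,
      f [tuple a1; a2] = a2 /\
      uniq [:: a1; a2; b1; b2] /\
      f [tuple b1; b2] = b1 /\ b1 != b2.
  move=> P Q S T uPQST fPQ fST.
  have [b1 [b2 [hb1 hb2 b12]]] := @fresh2 X [:: a1; a2] (leq_trans (isT : 4 <= 5) hX).
  have [pi Hpi] : exists pi : {perm X}, map pi [:: a1; a2; b1; b2] = [:: P; Q; S; T].
    apply: perm_ext => //=.
    move: hb1 hb2; rewrite !inE !negb_or => /andP[hb11 hb12] /andP[hb21 hb22].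
    by rewrite ha b12 !(eq_sym a1) !(eq_sym a2) hb11 hb12 hb21 hb22.
  move: Hpi => /= [p1 p2 p3 p4].
  exists (fun x => (pi^-1)%g (f (map_tuple pi x))); split.
    exact: conj_inF.
  exists b1, b2; split.
    by rewrite tuple2_map p1 p2 fPQ -p2 permK.
  split.
    move: hb1 hb2; rewrite /= !inE !negb_or => /andP[hb11 hb12] /andP[hb21 hb22].
    by rewrite ha b12 !(eq_sym a1) !(eq_sym a2) hb11 hb12 hb21 hb22.
  by rewrite tuple2_map p3 p4 fST -p3 permK.
have [P [Q [PQ fPQ]]] : exists P Q, P != Q /\ f [tuple P; Q] = Q.
  case: (boolP [forall t, f t == tnth t ord0]) => [/forallP H | /forallPn [t Ht]].
    by exfalso; apply: hnm; exists ord0 => t; apply/eqP.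
  move: Ht; rewrite {1}(tup2 t).
  set p := tnth t ord0; set q := tnth t (lift ord0 ord0) => Ht.
  have pq : p != q.
    apply/eqP => E; move: Ht; rewrite -E.
    have -> : [tuple p; p] = nseq_tuple 2 p by apply: val_inj.
    by rewrite h1 eqxx.
  exists p, q; split => //.
  by case: (mem _ _ pq) => // E; rewrite E eqxx in Ht.
have [S [T [ST fST]]] : exists S T, S != T /\ f [tuple S; T] = S.
  case: (boolP [forall t, f t == tnth t (lift ord0 ord0)]) => [/forallP H | /forallPn [t Ht]].
    by exfalso; apply: hnm; exists (lift ord0 ord0) => t; apply/eqP.
  move: Ht; rewrite {1}(tup2 t).
  set p := tnth t ord0; set q := tnth t (lift ord0 ord0) => Ht.
  have pq : p != q.
    apply/eqP => E; move: Ht; rewrite -E.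
    have -> : [tuple p; p] = nseq_tuple 2 p by apply: val_inj.
    by rewrite h1 eqxx.
  exists p, q; split => //.
  by case: (mem _ _ pq) => // E; rewrite E eqxx in Ht.
have [u [v [hu hv uv]]] := @fresh2 X [:: P; Q; S; T] (leq_trans hk1 (ltnW hkX)).
move: hu hv; rewrite !inE !negb_or => /and4P[uP uQ uS uT] /and4P[vP vQ vS vT].
case: (mem _ _ uv) => E.
  apply: (key P Q u v) => //=.
  by rewrite !inE !negb_or PQ uv !(eq_sym P) !(eq_sym Q) uP vP uQ vQ.
apply: (key u v S T) => //=.
by rewrite !inE !negb_or uv uS uT vS vT ST.
Qed.
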